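(* The flow rewriting system $\mathsf c$ is terminating on the set of cycle-free atomic flows: there is no infinite chain $A_1\to_{\mathsf c}A_2\to_{\mathsf c}\cdots$ with $A_1$ cycle-free.
   Context: An atomic flow is a tuple $(V,E,\eta,up,lo)$: finite sets of vertices and edges, a labelling of vertices by interaction, cut, weakening, coweakening, contraction or cocontraction, and maps $up:E\to V\cup\{\top\}$, $lo:E\to V\cup\{\bot\}$. Upper edges of $\nu$: $lo(\epsilon)=\nu$; lower edges: $up(\epsilon)=\nu$. (Upper, lower) edge numbers: $(0,2)$ interaction, $(2,0)$ cut, $(0,1)$ weakening, $(1,0)$ coweakening, $(2,1)$ contraction, $(1,2)$ cocontraction; no directed cycles; there is $\pi:E\to\{+,-\}$ giving all edges of a (co)contraction the same sign and the two edges of an interaction/cut different signs. A path from $\nu$ to $\nu'$ is a sequence of edges $\epsilon_1,\dots,\epsilon_h$ with $lo(\epsilon_i)=up(\epsilon_{i+1})$, $up(\epsilon_1)=\nu$, $lo(\epsilon_h)=\nu'$; its reversal is a path from $\nu'$ to $\nu$. An $\mathsf{ai}$-path from $\nu$ to $\nu'$ is either a path from $\nu$ to $\nu'$ or a sequence $\epsilon_1,\dots,\epsilon_k,\epsilon_{k+1},\dots,\epsilon_h$ with $\epsilon_k\neq\epsilon_{k+1}$ such that, for some interaction or cut vertex $\nu''$, $\epsilon_1,\dots,\epsilon_k$ is an $\mathsf{ai}$-path from $\nu$ to $\nu''$ and $\epsilon_{k+1},\dots,\epsilon_h$ is an $\mathsf{ai}$-path from $\nu''$ to $\nu'$. An $\mathsf{ai}$-cycle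 is an $\mathsf{ai}$-path from a vertex to itself in which no edge appears twice. A flow is cycle-free if it has no $\mathsf{ai}$-cycle. $A\to_{\mathsf c}B$ means $B$ results from $A$ by one of these subgraph replacements: (c1) a contraction with upper edges $\epsilon_1,\epsilon_2$ whose lower edge is an upper edge of a cut with other upper edge $\epsilon_3$: replace by a new cocontraction with upper edge $\epsilon_3$ and new lower edges $\delta_1,\delta_2$, and two new cuts with upper edges $\{\epsilon_1,\delta_1\}$ and $\{\epsilon_2,\delta_2\}$; (c2) an interaction with lower edges $\epsilon_3,\epsilon_4$ where $\epsilon_4$ is the upper edge of a cocontraction with lower edges $\epsilon_1,\epsilon_2$: replace by a new contraction with lower edge $\epsilon_3$ and new upper edges $\delta_1,\delta_2$, and two new interactions with lower edges $\{\epsilon_1,\delta_1\}$ and $\{\epsilon_2,\delta_2\}$; (c3) a contraction with upper edges $\epsilon_1,\epsilon_2$ whose lower edge is the upper edge of a cocontraction with lower edges $\epsilon_3,\epsilon_4$: replace by cocontractions $\kappa_1,\kappa_2$ with upper edges $\epsilon_1,\epsilon_2$, contractions $\gamma_3,\gamma_4$ with lower edges $\epsilon_3,\epsilon_4$, and four new edges, one from each $\kappa_i$ to each $\gamma_j$. *)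

(* Defs.v *)
From mathcomp Require Import all_boot.
Set Implicit Arguments. Unset Strict Implicit. Unset Printing Implicit Defensive.

Inductive kind := Int | Cut | Wk | Cowk | Ctr | Coctr.

(* A (pre)flow: finite lists of vertex and edge names, a labelling eta,
   and up/lo maps where [None] encodes top (for up) resp. bottom (for lo).
   Values of eta/up/lo outside fV/fE are irrelevant. *)
Record flow := Flow {
  fV : seq nat; fE : seq nat;
  eta : nat -> kind;
  up : nat -> option nat;
  lo : nat -> option nat }.

Definition upper_edges (A : flow) (v : nat) := [seq e <- fE A | lo A e == Some v].
Definition lower_edges (A : flow) (v : nat) := [seq e <- fE A | up A e == Some v].

(* (number of upper edges, number of lower edges) *)
Definition arity (k : kind) : nat * nat :=
  match k with
  | Int => (0, 2) | Cut => (2, 0) | Wk => (0, 1)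
  | Cowk => (1, 0) | Ctr => (2, 1) | Coctr => (1, 2)
  end.

Fixpoint dpath (A : flow) (v : nat) (es : seq nat) (v' : nat) : Prop :=
  match es with
  | [::] => False
  | e :: es' => e \in fE A /\ up A e = Some v /\
      match es' with
      | [::] => lo A e = Some v'
      | _ :: _ => exists w, lo A e = Some w /\ dpath A w es' v'
      end
  end.

Definition is_flow (A : flow) : Prop :=
  [/\ uniq (fV A) /\ uniq (fE A),
   (forall e, e \in fE A ->
      (forall v, up A e = Some v -> v \in fV A) /\
      (forall v, lo A e = Some v -> v \in fV A)),
   (forall v, v \in fV A ->
      size (upper_edges A v) = (arity (eta A v)).1 /\
      size (lower_edges A v) = (arity (eta A v)).2),
   (forall v es, ~ dpath A v es v) &
   (exists pi : nat -> bool, forall v, v \in fV A ->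
      match eta A v with
      | Ctr | Coctr => forall e e', e \in upper_edges A v ++ lower_edges A v ->
                         e' \in upper_edges A v ++ lower_edges A v -> pi e = pi e'
      | Int => forall e e', e \in lower_edges A v -> e' \in lower_edges A v ->
                 e != e' -> pi e != pi e'
      | Cut => forall e e', e \in upper_edges A v -> e' \in upper_edges A v ->
                 e != e' -> pi e != pi e'
      | _ => True
      end)].

Inductive aipath (A : flow) : nat -> seq nat -> nat -> Prop :=
| ai_path v es v' : dpath A v es v' -> aipath A v es v'
| ai_rpath v es v' : dpath A v' (rev es) v -> aipath A v es v'
| ai_cat v es1 w es2 v' :
    aipath A v es1 w -> aipath A w es2 v' ->
    w \in fV A -> (eta A w = Int \/ eta A w = Cut) ->
    last 0 es1 <> head 0 es2 ->
    aipath A v (es1 ++ es2) v'.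

Definition aicycle (A : flow) (v : nat) (es : seq nat) : Prop :=
  aipath A v es v /\ uniq es.

Definition cycle_free (A : flow) : Prop := forall v es, ~ aicycle A v es.

Definition frame (A B : flow) (newV remV newE remE modE : seq nat) : Prop :=
  [/\ uniq newV /\ all (fun x => x \notin fV A) newV,
      uniq newE /\ all (fun x => x \notin fE A) newE,
      fV B =i newV ++ [seq x <- fV A | x \notin remV] /\
      fE B =i newE ++ [seq e <- fE A | e \notin remE],
      (forall x, x \in fV A -> x \notin remV -> eta B x = eta A x) &
      (forall e, e \in fE A -> e \notin remE -> e \notin modE ->
         up B e = up A e /\ lo B e = lo A e)].

Definition c1_step (A B : flow) : Prop :=
  exists g k e1 e2 e3 e k' c1 c2 d1 d2 : nat,
  [/\ [/\ g \in fV A, eta A g = Ctr, k \in fV A & eta A k = Cut] /\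
      [/\ e1 \in fE A, e2 \in fE A, e3 \in fE A & e \in fE A],
      [/\ e1 != e2, lo A e1 = Some g, lo A e2 = Some g, up A e = Some g &
          [/\ lo A e = Some k, e3 != e & lo A e3 = Some k]],
      frame A B [:: k'; c1; c2] [:: g; k] [:: d1; d2] [:: e] [:: e1; e2; e3],
      [/\ eta B k' = Coctr, eta B c1 = Cut & eta B c2 = Cut] &
      [/\ up B e1 = up A e1 /\ lo B e1 = Some c1,
          up B e2 = up A e2 /\ lo B e2 = Some c2,
          up B e3 = up A e3 /\ lo B e3 = Some k',
          up B d1 = Some k' /\ lo B d1 = Some c1 &
          up B d2 = Some k' /\ lo B d2 = Some c2]].

Definition c2_step (A B : flow) : Prop :=
  exists i k e1 e2 e3 e4 g i1 i2 d1 d2 : nat,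
  [/\ [/\ i \in fV A, eta A i = Int, k \in fV A & eta A k = Coctr] /\
      [/\ e1 \in fE A, e2 \in fE A, e3 \in fE A & e4 \in fE A],
      [/\ e3 != e4, up A e3 = Some i, up A e4 = Some i, lo A e4 = Some k &
          [/\ e1 != e2, up A e1 = Some k & up A e2 = Some k]],
      frame A B [:: g; i1; i2] [:: i; k] [:: d1; d2] [:: e4] [:: e1; e2; e3],
      [/\ eta B g = Ctr, eta B i1 = Int & eta B i2 = Int] &
      [/\ up B e3 = Some g /\ lo B e3 = lo A e3,
          up B e1 = Some i1 /\ lo B e1 = lo A e1,
          up B e2 = Some i2 /\ lo B e2 = lo A e2,
          up B d1 = Some i1 /\ lo B d1 = Some g &
          up B d2 = Some i2 /\ lo B d2 = Some g]].

Definition c3_step (A B : flow) : Prop :=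
  exists g k e1 e2 e e3 e4 ka1 ka2 ga3 ga4 f13 f14 f23 f24 : nat,
  [/\ [/\ g \in fV A, eta A g = Ctr, k \in fV A & eta A k = Coctr] /\
      [/\ e1 \in fE A, e2 \in fE A, e \in fE A, e3 \in fE A & e4 \in fE A],
      [/\ e1 != e2, lo A e1 = Some g, lo A e2 = Some g, up A e = Some g &
          [/\ lo A e = Some k, e3 != e4, up A e3 = Some k & up A e4 = Some k]],
      frame A B [:: ka1; ka2; ga3; ga4] [:: g; k] [:: f13; f14; f23; f24] [:: e]
        [:: e1; e2; e3; e4],
      [/\ eta B ka1 = Coctr, eta B ka2 = Coctr, eta B ga3 = Ctr & eta B ga4 = Ctr] &
      [/\ [/\ up B e1 = up A e1 /\ lo B e1 = Some ka1,
              up B e2 = up A e2 /\ lo B e2 = Some ka2,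
              up B e3 = Some ga3 /\ lo B e3 = lo A e3 &
              up B e4 = Some ga4 /\ lo B e4 = lo A e4],
          up B f13 = Some ka1 /\ lo B f13 = Some ga3,
          up B f14 = Some ka1 /\ lo B f14 = Some ga4,
          up B f23 = Some ka2 /\ lo B f23 = Some ga3 &
          up B f24 = Some ka2 /\ lo B f24 = Some ga4]].

Definition cstep (A B : flow) : Prop :=
  is_flow A /\ (c1_step A B \/ c2_step A B \/ c3_step A B).

(* Main.v *)
Require Import Defs.
From mathcomp Require Import all_boot zify.
From Stdlib Require Import ClassicalEpsilon.
Set Implicit Arguments. Unset Strict Implicit. Unset Printing Implicit Defensive.

Definition node := (nat * bool)%type.
Definition tl (A : flow) (a : node) := if a.2 then up A a.1 else lo A a.1.
Definition hd (A : flow) (a : node) := if a.2 then lo A a.1 else up A a.1.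
Definition turnk (d : bool) (k : kind) : bool :=
  if d then (if k is Cut then true else false) else (if k is Int then true else false).
Definition arcb (A : flow) (a b : node) : bool :=
  match hd A a, tl A b with
  | Some v, Some w => (v == w) && ((a.2 == b.2) || ((a.1 != b.1) && turnk a.2 (eta A v)))
  | _, _ => false end.
Definition ar (A : flow) : rel node := fun a b =>
  [&& a.1 \in fE A, b.1 \in fE A & arcb A a b].

Lemma arcbP A a b : arcb A a b ->
  exists v, hd A a = Some v /\ tl A b = Some v /\
   (a.2 = b.2 \/ (a.1 <> b.1 /\ a.2 <> b.2 /\ turnk a.2 (eta A v))).
Proof.
rewrite /arcb; case: (hd A a) => [v|] //; case: (tl A b) => [w|] //.
case/andP => /eqP <- H; exists v; do 2 (split; first done).
move: H; case: (boolP (a.2 == b.2)) => [/eqP E _|N /= /andP [/eqP N1 K]]; first by left.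
by right; split => //; split => // E; rewrite E eqxx in N.
Qed.

Lemma flow_up A : is_flow A -> forall x v, x \in fE A -> up A x = Some v -> v \in fV A.
Proof. by case=> _ H _ _ _ x v /H [H1 _]; apply: H1. Qed.
Lemma flow_lo A : is_flow A -> forall x v, x \in fE A -> lo A x = Some v -> v \in fV A.
Proof. by case=> _ H _ _ _ x v /H [_ H1]; apply: H1. Qed.
Lemma flow_uniqE A : is_flow A -> uniq (fE A).
Proof. by case=> [[_ ?]]. Qed.
Lemma flow_uniqV A : is_flow A -> uniq (fV A).
Proof. by case=> [[? _]]. Qed.

Lemma mem_upper A v x : (x \in upper_edges A v) = (x \in fE A) && (lo A x == Some v).
Proof. by rewrite /upper_edges mem_filter andbC. Qed.
Lemma mem_lower A v x : (x \in lower_edges A v) = (x \in fE A) && (up A x == Some v).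
Proof. by rewrite /lower_edges mem_filter andbC. Qed.

Lemma size_pos_mem (s : seq nat) x : x \in s -> 0 < size s.
Proof. by case: s. Qed.

Definition polar A (pi : nat -> bool) :=
  (forall v, v \in fV A ->
      match eta A v with
      | Ctr | Coctr => forall e e', e \in upper_edges A v ++ lower_edges A v ->
                         e' \in upper_edges A v ++ lower_edges A v -> pi e = pi e'
      | Int => forall e e', e \in lower_edges A v -> e' \in lower_edges A v ->
                 e != e' -> pi e != pi e'
      | Cut => forall e e', e \in upper_edges A v -> e' \in upper_edges A v ->
                 e != e' -> pi e != pi e'
      | _ => True
      end).

Lemma flow_polar A : is_flow A -> exists pi, polar A pi.
Proof. by case. Qed.

Lemma straight_pi A pi (hA : is_flow A) : polar A pi -> forall v x y, v \in fV A ->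
  x \in upper_edges A v -> y \in lower_edges A v -> pi x = pi y.
Proof.
move=> Hpi v x y Hv Hx Hy; have [_ _ Har _ _] := hA.
have [Hu Hl] := Har v Hv; have := Hpi v Hv.
have Hu0 := size_pos_mem Hx; have Hl0 := size_pos_mem Hy.
case E: (eta A v) Hu Hl => //= Hu Hl.
all: try (by rewrite Hu in Hu0); try (by rewrite Hl in Hl0).
all: by move=> H; apply: H; rewrite mem_cat; apply/orP; [left|right].
Qed.

Lemma arc_sign A (hA : is_flow A) pi : polar A pi ->
  forall a b, ar A a b -> (a.2 == pi a.1) = (b.2 == pi b.1).
Proof.
move=> Hpi [x dx] [y dy] /and3P [/= Hx Hy /arcbP [v [Hh [Ht Hk]]]].
move: Hh Ht Hk; rewrite /hd /tl /=.
case: dx; case: dy => /= Hh Ht Hk.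
- have Hv := flow_lo hA Hx Hh.
  suff ->: pi x = pi y by [].
  by apply: (straight_pi hA Hpi Hv); rewrite ?mem_upper ?mem_lower ?Hx ?Hy ?Hh ?Ht ?eqxx.
- case: Hk => [//|[Nxy [_ K]]].
  have Hv := flow_lo hA Hx Hh; have := Hpi v Hv.
  case E: (eta A v) K => //= _ H.
  have := H x y; rewrite !mem_upper Hx Hy Hh Ht eqxx => /(_ isT isT).
  by move/eqP: Nxy => N /(_ N); case: (pi x); case: (pi y).
- case: Hk => [//|[Nxy [_ K]]].
  have Hv := flow_up hA Hx Hh; have := Hpi v Hv.
  case E: (eta A v) K => //= _ H.
  have := H x y; rewrite !mem_lower Hx Hy Hh Ht eqxx => /(_ isT isT).
  by move/eqP: Nxy => N /(_ N); case: (pi x); case: (pi y).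
- have Hv := flow_up hA Hx Hh.
  suff ->: pi y = pi x by [].
  by apply: (straight_pi hA Hpi Hv); rewrite ?mem_upper ?mem_lower ?Hx ?Hy ?Hh ?Ht ?eqxx.
Qed.

Lemma dpath_rcons A u p v x t : dpath A u p v -> x \in fE A -> up A x = Some v ->
  lo A x = Some t -> dpath A u (rcons p x) t.
Proof.
elim: p u => [|y p IH] u //=.
case: p IH => [|z p'] IH /=.
  by move=> [Hy [Hu Hl]] Hx Hux Hlx; split => //; split => //; exists v; split.
move=> [Hy [Hu [w [Hl D]]]] Hx Hux Hlx; split => //; split => //; exists w; split => //.
exact: (IH w D Hx Hux Hlx).
Qed.

Lemma run_down A a w s t : a.1 \in fE A -> path (ar A) a w -> all (fun c => c.2) (a::w) ->
  tl A a = Some s -> hd A (last a w) = Some t -> dpath A s (a.1 :: map fst w) t.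
Proof.
elim: w a s => [|b w IH] [x dx] s /= Hx.
  by move=> _; rewrite andbT => -> Ht Hh /=; rewrite /tl /hd /= in Ht Hh.
case/andP => /and3P [_ Hb /arcbP [v [Hh [Ht _]]]] P /and3P [D Db Dw] Hs Ht'.
rewrite /tl /hd D /= in Hs Hh *.
split => //; split => //; exists v; split => //.
by apply: IH => //=; rewrite ?Db ?Dw //.
Qed.

Lemma run_up A a w s t : a.1 \in fE A -> path (ar A) a w -> all (fun c => ~~ c.2) (a::w) ->
  tl A a = Some s -> hd A (last a w) = Some t -> dpath A t (rev (a.1 :: map fst w)) s.
Proof.
elim: w a s => [|b w IH] [x dx] s /= Hx.
  by move=> _; rewrite andbT => /negbTE -> Ht Hh /=; rewrite /tl /hd /= in Ht Hh; rewrite /rev /=.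
case/andP => /and3P [_ Hb /arcbP [v [Hh [Ht _]]]] P /and3P [/negbTE D Db Dw] Hs Ht'.
rewrite /tl /hd D /= in Hs Hh *.
rewrite rev_cons; apply: (dpath_rcons (v:=v)) => //.
by apply: (IH b v Hb P _ Ht Ht'); rewrite /= Db Dw.
Qed.

Lemma run_ai A a w s t : a.1 \in fE A -> path (ar A) a w -> all (fun c => c.2 == a.2) w ->
  tl A a = Some s -> hd A (last a w) = Some t -> aipath A s (a.1 :: map fst w) t.
Proof.
move=> Hx P Al Hs Ht; case D: a.2.
- apply: ai_path; apply: run_down => //=; rewrite D /=.
  by apply/allP => c /(allP Al) /eqP ->; rewrite D.
- apply: ai_rpath; apply: run_up => //=; rewrite D /=.
  by apply/allP => c /(allP Al) /eqP ->; rewrite D.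
Qed.

Lemma all_take_find T (p : pred T) s : all (fun c => ~~ p c) (take (find p s) s).
Proof. elim: s => //= x s IH; case E: (p x) => //=; by rewrite E IH. Qed.

Lemma drop_find_head T (p : pred T) s b r : drop (find p s) s = b :: r -> p b.
Proof.
elim: s => //= x s IH; case E: (p x) => /= Hd.
  by case: Hd => Hx _; rewrite -Hx.
exact: IH Hd.
Qed.

Lemma walk_ai A (hA : is_flow A) n : forall a w s t, size w < n -> a.1 \in fE A ->
  path (ar A) a w -> tl A a = Some s -> hd A (last a w) = Some t ->
  aipath A s (a.1 :: map fst w) t.
Proof.
elim: n => [//|n IH] a w s t Hn Ha P Hs Ht.
set j := find (fun c : node => c.2 != a.2) w.
have Ew := cat_take_drop j w.
have Al := all_take_find (fun c : node => c.2 != a.2) w.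
have Al' : all (fun c : node => c.2 == a.2) (take j w).
  by apply/allP => c /(allP Al); rewrite negbK.
case Ed: (drop j w) => [|b q2].
  rewrite Ed cats0 in Ew; rewrite Ew in Al'.
  exact: run_ai.
have Hb : b.2 != a.2 := drop_find_head Ed.
rewrite Ed in Ew; set q1 := take j w in Ew Al'.
rewrite -Ew cat_path /= in P; case/and3P: P => P1 Hab P2.
case/and3P: (Hab) => Hl Hbm /arcbP [v [Hv1 [Hv2 K]]].
have La : (last a q1).2 = a.2.
  have := mem_last a q1; rewrite inE => /orP [/eqP -> //|/(allP Al') /eqP //].
case: K => [E|[N [_ K]]].
  by rewrite -E La eqxx in Hb.
rewrite -Ew map_cat /= -cat_cons.
apply: (ai_cat (w:=v)).
- apply: run_ai => //.
- apply: (IH b q2) => //.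
  rewrite -Ew size_cat /= in Hn; lia.
  by move: Ht; rewrite -Ew last_cat.
- move: Hv2; rewrite /tl; case: (b.2) => H.
    by move: (flow_up hA Hbm H).
  by move: (flow_lo hA Hbm H).
- move: K; rewrite /turnk; case: (last a q1).2; case: (eta A v) => //; auto.
- by rewrite /= (last_map fst).
Qed.

Lemma path_sign A (hA : is_flow A) pi : polar A pi -> forall a w, path (ar A) a w ->
  all (fun c : node => (c.2 == pi c.1) == (a.2 == pi a.1)) w.
Proof.
move=> Hpi a w; elim: w a => //= b w IH a /andP [Hab P].
have Es := arc_sign hA Hpi Hab.
rewrite Es eqxx /=; exact: IH b P.
Qed.

Lemma closed_walk_not_cf A (hA : is_flow A) a w : uniq (a :: w) -> path (ar A) a w ->
  ar A (last a w) a -> ~ cycle_free A.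
Proof.
move=> U P Hc Hcf.
case/and3P: (Hc) => _ Ha /arcbP [v [Hv1 [Hv2 _]]].
have Hai : aipath A v (a.1 :: map fst w) v.
  by apply: (walk_ai hA (n := (size w).+1)).
apply: (Hcf v (a.1 :: map fst w)); split => //.
have [pi Hpi] := flow_polar hA.
have Al := path_sign hA Hpi P.
have Hs : forall c, c \in a :: w -> (c.2 == pi c.1) = (a.2 == pi a.1).
  move=> c; rewrite inE => /orP [/eqP -> //|/(allP Al) /eqP //].
rewrite -(map_inj_in_uniq (f := fst)) in U; first by [].
move=> [x1 d1] [x2 d2] H1 H2 /= E; subst x2.
have := Hs _ H1; have := Hs _ H2; rewrite /= => <-.
by move: H1 H2; case: d1; case: d2; case: (pi x1).
Qed.

Definition reach A (a b : node) := exists p, [/\ path (ar A) a p, last a p = b & p != [::]].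

Lemma reach_acyc A (hA : is_flow A) : cycle_free A -> forall a, ~ reach A a a.
Proof.
move=> Hcf a [[|b p1] [P Hl N]] //.
case/andP: P => Hab P; rewrite /= in Hl.
move: Hl; case: (shortenP P) => p' P' U _ Hl.
apply: (closed_walk_not_cf hA U P') => //; by rewrite Hl.
Qed.

Lemma reach_arc A a b c : reach A c a -> ar A a b -> reach A c b.
Proof.
move=> [p [P Hl N]] Hab; exists (rcons p b); split.
- by rewrite rcons_path P Hl.
- by rewrite last_rcons.
- by case: p {P Hl N}.
Qed.

Lemma reach1 A a b : ar A a b -> reach A a b.
Proof. by move=> H; exists [:: b]; rewrite /= H. Qed.

Definition pb (P : Prop) : bool := if excluded_middle_informative P then true else false.
Lemma pbP (P : Prop) : pb P <-> P.
Proof. by rewrite /pb; case: excluded_middle_informative. Qed.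

Definition nodes A : seq node := [seq (x, true) | x <- fE A] ++ [seq (x, false) | x <- fE A].
Lemma mem_nodes A a : (a \in nodes A) = (a.1 \in fE A).
Proof.
case: a => x d; rewrite mem_cat /=.
have I1 : injective (fun y : nat => (y,true)) by move=> ? ? [].
have I2 : injective (fun y : nat => (y,false)) by move=> ? ? [].
case: d; rewrite ?(mem_map I1) ?(mem_map I2).
- by case: mapP => [[y _] //|_]; rewrite orbF.
- by case: mapP => [[y _] //|_].
Qed.

Lemma count_lt (T : eqType) (P Q : pred T) (s : seq T) z :
  {in s, forall c, P c -> Q c} -> z \in s -> Q z -> ~~ P z ->
  count P s < count Q s.
Proof.
have count_le : forall s, {in s, forall c, P c -> Q c} -> count P s <= count Q s.
  elim => //= x s' IH H; apply: leq_add.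
    by case E: (P x) => //=; rewrite (H x) // in_cons eqxx.
  by apply: IH => c Hc Pc; apply: H => //; rewrite in_cons Hc orbT.
elim: s => //= x s IH H; rewrite inE => /orP [/eqP Ez|Hz] Qz Pz.
  subst z; rewrite Qz (negbTE Pz) add0n add1n ltnS; apply: count_le.
  by move=> c Hc Pc; apply: H => //; rewrite in_cons Hc orbT.
rewrite -addnS; apply: leq_add.
  by case E: (P x) => //=; rewrite (H x) // in_cons eqxx.
by apply: IH => // c Hc Pc; apply: H => //; rewrite in_cons Hc orbT.
Qed.

Definition valid A (r : node -> nat) N :=
  (forall a b, ar A a b -> r a < r b) /\ (forall a, a.1 \in fE A -> r a <= N).

Lemma init_rank A : is_flow A -> cycle_free A -> exists r, valid A r (size (nodes A)).
Proof.
move=> hA Hcf.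
exists (fun a => count (fun c => pb (reach A c a)) (nodes A)); split.
- move=> a b Hab; apply: (count_lt (z := a)).
  + move=> c _ /pbP H; apply/pbP; exact: reach_arc H Hab.
  + by rewrite mem_nodes; case/and3P: Hab.
  + by apply/pbP; apply: reach1.
  + by apply/negP => /pbP; apply: reach_acyc.
- move=> a _; exact: count_size.
Qed.

Definition isCtr (k : kind) := if k is Ctr then true else false.
Definition isCoctr (k : kind) := if k is Coctr then true else false.
Definition isK (P : kind -> bool) A (o : option nat) :=
  if o is Some v then (v \in fV A) && P (eta A v) else false.
Definition phi N k := 4 ^ (N - k).
Definition psi k := 4 ^ k.
Definition cost A N (r : node -> nat) x :=
  (if isK isCtr A (up A x) then phi N (r (x,true)) + psi (r (x,false)) else 0) +
  (if isK isCoctr A (lo A x) then psi (r (x,true)) + phi N (r (x,false)) else 0).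
Definition Phi A N r := \sum_(x <- fE A) cost A N r x.

Lemma psi_lt a b : a < b -> 4 * psi a <= psi b.
Proof. move=> H; rewrite /psi -expnS; apply: leq_pexp2l => //. Qed.
Lemma phi_lt N a b : a < b -> b <= N -> 4 * phi N b <= phi N a.
Proof. move=> H1 H2; rewrite /phi -expnS; apply: leq_pexp2l => //; lia. Qed.

Lemma sum_pick (s : seq nat) F e0 : uniq s -> e0 \in s ->
  \sum_(x <- s) F x = F e0 + \sum_(x <- [seq x <- s | x != e0]) F x.
Proof.
elim: s => //= y s IH /andP [Ny U]; rewrite in_cons => /orP [/eqP E|H].
  subst y; rewrite eqxx big_cons; congr (_ + _).
  have -> : [seq x <- s | x != e0] = s by apply/all_filterP/allP => x Hx; apply/eqP => E; subst x; rewrite Hx in Ny.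
  by [].
have Hy : y != e0 by apply/eqP => E; subst y; rewrite H in Ny.
rewrite Hy !big_cons (IH U H) addnCA //.
Qed.

Lemma sum_ite_le (s : seq nat) m X : uniq s -> \sum_(x <- s) (if x == m then X else 0) <= X.
Proof.
elim: s => [|y s IH] /=; first by rewrite big_nil.
case/andP => Ny U; rewrite big_cons; case: (eqVneq y m) => [E|N].
  subst y; rewrite big1_seq ?addn0 // => x /andP [_ Hx]; case: eqP => // E; subst x; by rewrite Hx in Ny.
by rewrite add0n IH.
Qed.

Lemma sum_ite_ge (s : seq nat) x X : x \in s -> X x <= \sum_(m <- s) (if x == m then X m else 0).
Proof.
elim: s => //= y s IH; rewrite in_cons big_cons => /orP [/eqP E|H].
  by subst y; rewrite eqxx leq_addr.
by apply: leq_trans (IH H) _; rewrite leq_addl.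
Qed.

Definition hmap (newE : seq nat) e0 fl (a : node) : node :=
  if a.1 \in newE then (e0, a.2 (+) fl) else a.

Lemma arcbI A a b v : hd A a = Some v -> tl A b = Some v ->
  (a.2 = b.2 \/ (a.1 <> b.1 /\ turnk a.2 (eta A v))) -> arcb A a b.
Proof.
move=> H1 H2 H; rewrite /arcb H1 H2 eqxx /=.
case: H => [->|[N K]]; first by rewrite eqxx.
by rewrite K andbT; apply/orP; right; apply/eqP.
Qed.

Section Frame.
Variables (A B : flow) (newV remV newE remE modE : seq nat).
Hypothesis hA : is_flow A.
Hypothesis hB : is_flow B.
Hypothesis HF : frame A B newV remV newE remE modE.

Lemma fr_newV v : v \in newV -> v \notin fV A.
Proof. by case: HF => [[_ /allP H]] _ _ _ _ /H. Qed.
Lemma fr_newE x : x \in newE -> x \notin fE A.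
Proof. by case: HF => _ [_ /allP H] _ _ _ /H. Qed.
Lemma fr_fV v : (v \in fV B) = (v \in newV ++ [seq x <- fV A | x \notin remV]).
Proof. by case: HF => _ _ [H _] _ _; rewrite H. Qed.
Lemma fr_fE x : (x \in fE B) = (x \in newE ++ [seq e <- fE A | e \notin remE]).
Proof. by case: HF => _ _ [_ H] _ _; rewrite H. Qed.

Lemma fr_clsE x : x \in fE B -> x \in newE \/ (x \in fE A /\ x \notin remE).
Proof. by rewrite fr_fE mem_cat mem_filter => /orP [->|/andP [-> ->]]; [left|right]. Qed.

Lemma fr_eta v : v \in fV A -> v \in fV B -> eta B v = eta A v.
Proof.
move=> HA; rewrite fr_fV mem_cat mem_filter => /orP [/fr_newV H|/andP [Hr _]].
  by rewrite HA in H.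
by case: HF => _ _ _ H _; apply: H.
Qed.

Lemma fr_keep x : x \in fE A -> x \notin remE -> x \notin modE ->
  up B x = up A x /\ lo B x = lo A x.
Proof. by case: HF => _ _ _ _ H; apply: H. Qed.

Lemma fr_keepE x : x \in fE A -> x \notin remE -> x \in fE B.
Proof. by move=> H1 H2; rewrite fr_fE mem_cat mem_filter H1 H2 orbT. Qed.

Lemma fr_notnew x : x \in fE A -> x \notin newE.
Proof. by move=> H; apply/negP => /fr_newE; rewrite H. Qed.

Lemma isK_up P x : x \in fE A -> isK P B (up A x) -> isK P A (up A x).
Proof.
move=> Hx; rewrite /isK; case E: (up A x) => [u|] //.
have Hu := flow_up hA Hx E.
by case/andP => HB; rewrite (fr_eta Hu HB) Hu.
Qed.
Lemma isK_lo P x : x \in fE A -> isK P B (lo A x) -> isK P A (lo A x).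
Proof.
move=> Hx; rewrite /isK; case E: (lo A x) => [u|] //.
have Hu := flow_lo hA Hx E.
by case/andP => HB; rewrite (fr_eta Hu HB) Hu.
Qed.

Hypothesis Hnew : forall x v, x \in newE -> (up B x = Some v \/ lo B x = Some v) -> v \in newV.
Hypothesis Hmodu : forall x v, x \in modE -> x \in fE A -> up B x = Some v -> v \in newV \/ up A x = Some v.
Hypothesis Hmodl : forall x v, x \in modE -> x \in fE A -> lo B x = Some v -> v \in newV \/ lo A x = Some v.

Lemma old_tl a v : a.1 \in fE B -> tl B a = Some v -> v \notin newV ->
  a.1 \in fE A /\ a.1 \notin newE /\ tl A a = Some v.
Proof.
move=> Hx Ht Hv; case: (fr_clsE Hx) => [Hn|[HA Hr]].
  by rewrite (Hnew (v:=v) Hn) in Hv; rewrite /tl in Ht; case: (a.2) Ht; auto.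
split => //; split; first exact: fr_notnew.
case: (boolP (a.1 \in modE)) => Hm.
  move: Ht; rewrite /tl; case: (a.2) => Ht.
    by case: (Hmodu Hm HA Ht) => // H; rewrite H in Hv.
  by case: (Hmodl Hm HA Ht) => // H; rewrite H in Hv.
have [E1 E2] := fr_keep HA Hr Hm.
by move: Ht; rewrite /tl E1 E2.
Qed.

Lemma old_hd a v : a.1 \in fE B -> hd B a = Some v -> v \notin newV ->
  a.1 \in fE A /\ a.1 \notin newE /\ hd A a = Some v.
Proof.
move=> Hx Ht Hv; case: (fr_clsE Hx) => [Hn|[HA Hr]].
  by rewrite (Hnew (v:=v) Hn) in Hv; rewrite /hd in Ht; case: (a.2) Ht; auto.
split => //; split; first exact: fr_notnew.
case: (boolP (a.1 \in modE)) => Hm.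
  move: Ht; rewrite /hd; case: (a.2) => Ht.
    by case: (Hmodl Hm HA Ht) => // H; rewrite H in Hv.
  by case: (Hmodu Hm HA Ht) => // H; rewrite H in Hv.
have [E1 E2] := fr_keep HA Hr Hm.
by move: Ht; rewrite /hd E1 E2.
Qed.

Lemma hom_old e0 fl a b v : ar B a b -> hd B a = Some v -> v \notin newV ->
  ar A (hmap newE e0 fl a) (hmap newE e0 fl b).
Proof.
case/and3P => Ha Hb /arcbP [w [H1 [H2 K]]] H1' Hv.
rewrite H1 in H1'; case: H1' => E; subst w.
have [HaA [Han Ha']] := old_hd Ha H1 Hv.
have [HbA [Hbn Hb']] := old_tl Hb H2 Hv.
rewrite /hmap (negbTE Han) (negbTE Hbn) /ar HaA HbA /=.
apply: (arcbI Ha' Hb').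
case: K => [E|[N [_ K]]]; [by left|right; split => //].
have HvA : v \in fV A by move: Ha'; rewrite /hd; case: (a.2) => H; [by move: (flow_lo hA HaA H)|by move: (flow_up hA HaA H)].
have HvB : v \in fV B by move: H1; rewrite /hd; case: (a.2) => H; [by move: (flow_lo hB Ha H)|by move: (flow_up hB Ha H)].
by rewrite -(fr_eta HvA HvB).
Qed.

Lemma new_end x v : x \in fE B -> (up B x = Some v \/ lo B x = Some v) -> v \in newV ->
  x \in newE \/ (x \in modE /\ x \in fE A).
Proof.
move=> Hx Hv Hn; case: (fr_clsE Hx) => [|[HA Hr]]; first by left.
case: (boolP (x \in modE)) => Hm; first by right.
have [E1 E2] := fr_keep HA Hr Hm.
rewrite E1 E2 in Hv; case: Hv => H.
  by have := flow_up hA HA H; rewrite (negbTE (fr_newV Hn)).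
by have := flow_lo hA HA H; rewrite (negbTE (fr_newV Hn)).
Qed.

End Frame.

Lemma leq_sum_seq (s : seq nat) (F G : nat -> nat) :
  (forall x, x \in s -> F x <= G x) -> \sum_(x <- s) F x <= \sum_(x <- s) G x.
Proof.
elim: s => [|y s IH] H; first by rewrite !big_nil.
rewrite !big_cons leq_add //; first by apply: H; rewrite in_cons eqxx.
by apply: IH => x Hx; apply: H; rewrite in_cons Hx orbT.
Qed.

Lemma Phi_frame A B newV remV newE e0 modE N rA X fl :
  is_flow A -> uniq (fE B) -> frame A B newV remV newE [:: e0] modE -> e0 \in fE A ->
  (forall x, x \in newE -> cost B N (fun a => rA (hmap newE e0 fl a)) x = 0) ->
  (forall m, m \in modE -> m \in fE A ->
     cost B N (fun a => rA (hmap newE e0 fl a)) m <= cost A N rA m + X m) ->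
  Phi B N (fun a => rA (hmap newE e0 fl a)) + cost A N rA e0 <=
  Phi A N rA + \sum_(m <- modE) X m.
Proof.
move=> hA UB HF He0 Hn Hm.
set rB := (fun a => rA (hmap newE e0 fl a)).
set filt := [seq e <- fE A | e \notin [:: e0]].
have UA := flow_uniqE hA.
have Uc : uniq (newE ++ filt).
  rewrite cat_uniq filter_uniq // andbT.
  case: (HF) => _ [-> _] _ _ _ /=; apply/hasPn => x; rewrite mem_filter => /andP [_ Hx].
  by move: (fr_notnew HF Hx).
have Pm : perm_eq (fE B) (newE ++ filt) by apply: uniq_perm => // x; rewrite (fr_fE HF).
rewrite /Phi (perm_big _ Pm) big_cat /=.
rewrite big1_seq ?add0n; last by move=> x /andP [_ Hx]; apply: Hn.
rewrite (sum_pick _ UA He0).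
have -> : [seq x <- fE A | x != e0] = filt.
  by apply: eq_filter => x; rewrite mem_seq1.
have Hkeep : forall x, x \in filt -> rB (x,true) = rA (x,true) /\ rB (x,false) = rA (x,false).
  move=> x; rewrite mem_filter => /andP [_ Hx]; rewrite /rB /hmap /= (negbTE (fr_notnew HF Hx)) //.
have H1 : \sum_(x <- filt) cost B N rB x <=
          \sum_(x <- filt) (cost A N rA x + \sum_(m <- modE) (if x == m then X m else 0)).
  apply: leq_sum_seq => x Hx.
  have Hx' := Hx; rewrite mem_filter in Hx'; case/andP: Hx' => Hr HxA.
  case: (boolP (x \in modE)) => Hxm.
    apply: leq_trans (Hm x Hxm HxA) _; rewrite leq_add2l; exact: sum_ite_ge.
  apply: leq_trans (leq_addr _ _).
  have [E1 E2] := fr_keep HF HxA Hr Hxm.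
  have [K1 K2] := Hkeep x Hx.
  rewrite /cost E1 E2 K1 K2.
  apply: leq_add.
    case E: (isK isCtr B (up A x)) => //; by rewrite (isK_up hA HF HxA E).
  case E: (isK isCoctr B (lo A x)) => //; by rewrite (isK_lo hA HF HxA E).
rewrite [X in _ <= X]big_split /= in H1.
have H2 : \sum_(x <- filt) \sum_(m <- modE) (if x == m then X m else 0) <= \sum_(m <- modE) X m.
  rewrite exchange_big /=.
  apply: leq_sum_seq => m _; apply: sum_ite_le; exact: filter_uniq.
rewrite addnC -addnA leq_add2l; apply: leq_trans H1 _; rewrite leq_add2l //.
Qed.

Lemma step_generic A B newV remV newE e0 modE fl N r (X : nat -> nat) :
  is_flow A -> is_flow B -> frame A B newV remV newE [:: e0] modE -> e0 \in fE A ->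
  (forall x v, x \in newE -> (up B x = Some v \/ lo B x = Some v) -> v \in newV) ->
  (forall x v, x \in modE -> x \in fE A -> up B x = Some v -> v \in newV \/ up A x = Some v) ->
  (forall x v, x \in modE -> x \in fE A -> lo B x = Some v -> v \in newV \/ lo A x = Some v) ->
  (forall a b v, ar B a b -> hd B a = Some v -> v \in newV ->
      ar A (hmap newE e0 fl a) (hmap newE e0 fl b)) ->
  (forall x, x \in newE -> cost B N (fun a => r (hmap newE e0 fl a)) x = 0) ->
  (forall m, m \in modE -> m \in fE A ->
     cost B N (fun a => r (hmap newE e0 fl a)) m <= cost A N r m + X m) ->
  \sum_(m <- modE) X m < cost A N r e0 ->
  valid A r N ->
  valid B (fun a => r (hmap newE e0 fl a)) N /\
  Phi B N (fun a => r (hmap newE e0 fl a)) < Phi A N r.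
Proof.
move=> hA hB HF He0 Hn Hmu Hml Hnv Hc Hm Hlt [V1 V2]; split; first split.
- move=> a b Hab; apply: V1.
  case/and3P: (Hab) => _ _ /arcbP [v [H1 _]].
  case: (boolP (v \in newV)) => Hv; first exact: Hnv Hab H1 Hv.
  by move: (hom_old hA hB HF Hn Hmu Hml e0 fl Hab H1 Hv).
- move=> a Ha; apply: V2; rewrite /hmap; case: ifP => // Hn'.
  by case: (fr_clsE HF Ha) => [H|[H _]]; [rewrite H in Hn'|].
- have := Phi_frame hA (flow_uniqE hB) HF He0 Hc Hm.
  move=> H; rewrite -(ltn_add2r (cost A N r e0)); apply: leq_ltn_trans H _.
  by rewrite ltn_add2l.
Qed.

Lemma hmap_old A B newV remV newE remE modE e0 fl x d :
  frame A B newV remV newE remE modE -> x \in fE A -> hmap newE e0 fl (x,d) = (x,d).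
Proof. by move=> HF Hx; rewrite /hmap /= (negbTE (fr_notnew HF Hx)). Qed.
Lemma hmap_new newE e0 fl x d : x \in newE -> hmap newE e0 fl (x,d) = (e0, d (+) fl).
Proof. by move=> Hx; rewrite /hmap /= Hx. Qed.

Lemma fresh_up A B newV remV newE remE modE x w :
  is_flow A -> frame A B newV remV newE remE modE -> x \in fE A -> up A x = Some w -> w \in newV -> False.
Proof. move=> hA HF Hx H /(fr_newV HF); by move: (flow_up hA Hx H) => ->. Qed.
Lemma fresh_lo A B newV remV newE remE modE x w :
  is_flow A -> frame A B newV remV newE remE modE -> x \in fE A -> lo A x = Some w -> w \in newV -> False.
Proof. move=> hA HF Hx H /(fr_newV HF); by move: (flow_lo hA Hx H) => ->. Qed.

Lemma in3 (T : eqType) (x a b c : T) : x \in [:: a; b; c] -> [\/ x = a, x = b | x = c].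
Proof. by rewrite !inE => /or3P [/eqP|/eqP|/eqP]; [constructor 1|constructor 2|constructor 3]. Qed.
Lemma in2 (T : eqType) (x a b : T) : x \in [:: a; b] -> x = a \/ x = b.
Proof. by rewrite !inE => /orP [/eqP|/eqP]; auto. Qed.
Lemma in4 (T : eqType) (x a b c d : T) : x \in [:: a; b; c; d] -> [\/ x = a, x = b, x = c | x = d].
Proof. by rewrite !inE => /or4P [/eqP|/eqP|/eqP|/eqP]; [constructor 1|constructor 2|constructor 3|constructor 4]. Qed.

Lemma uniq3 (T : eqType) (a b c : T) : uniq [:: a; b; c] -> [/\ a <> b, a <> c & b <> c].
Proof. by rewrite /= !inE negb_or => /and3P [/andP [/eqP ? /eqP ?] /eqP ? _]. Qed.
Lemma uniq2 (T : eqType) (a b : T) : uniq [:: a; b] -> a <> b.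
Proof. by rewrite /= !inE => /andP [/eqP ? _]. Qed.

Lemma cost_mod_lo A B newV remV newE remE modE e0 fl N r x w :
  is_flow A -> frame A B newV remV newE remE modE -> x \in fE A ->
  up B x = up A x -> lo B x = Some w ->
  cost B N (fun a => r (hmap newE e0 fl a)) x <= cost A N r x +
    (if isCoctr (eta B w) then psi (r (x,true)) + phi N (r (x,false)) else 0).
Proof.
move=> hA HF Hx E1 E2; rewrite /cost E1 E2 !(hmap_old _ _ _ HF Hx).
rewrite -addnA leq_add //.
  case E: (isK isCtr B (up A x)) => //; by rewrite (isK_up hA HF Hx E).
rewrite /isK; case: (w \in fV B) => /=; last exact: leq0n.
by case: (isCoctr (eta B w)) => //; rewrite leq_addl.
Qed.

Lemma cost_mod_up A B newV remV newE remE modE e0 fl N r x w :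
  is_flow A -> frame A B newV remV newE remE modE -> x \in fE A ->
  lo B x = lo A x -> up B x = Some w ->
  cost B N (fun a => r (hmap newE e0 fl a)) x <= cost A N r x +
    (if isCtr (eta B w) then phi N (r (x,true)) + psi (r (x,false)) else 0).
Proof.
move=> hA HF Hx E1 E2; rewrite /cost E1 E2 !(hmap_old _ _ _ HF Hx).
rewrite [X in _ <= X]addnAC leq_add //.
  rewrite /isK; case: (w \in fV B) => /=; last exact: leq0n.
  by case: (isCtr (eta B w)) => //; rewrite leq_addl.
case E: (isK isCoctr B (lo A x)) => //; by rewrite (isK_lo hA HF Hx E).
Qed.

Lemma uniq4 (T : eqType) (a b c d : T) : uniq [:: a; b; c; d] ->
  a <> b /\ a <> c /\ a <> d /\ b <> c /\ b <> d /\ c <> d.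
Proof.
move=> U; repeat split; move=> E; subst; by rewrite /= !inE ?eqxx ?orbT /= ?andbF in U.
Qed.

Lemma step_c1 A B N r : is_flow A -> is_flow B -> c1_step A B -> valid A r N ->
  exists r', valid B r' N /\ Phi B N r' < Phi A N r.
Proof.
move=> hA hB [g [k [e1 [e2 [e3 [e [k' [c1 [c2 [d1 [d2 H]]]]]]]]]]] VA.
case: H => [[[Hg Eg Hk Ek] [He1 He2 He3 He]] [N12 L1 L2 Ue [Le N3 L3]] HF [Ek' Ec1 Ec2] [[UB1 LB1] [UB2 LB2] [UB3 LB3] [UD1 LD1] [UD2 LD2]]].
have [[UV _] [UE _] _ _ _] := HF.
have [Nk1 Nk2 N12'] := uniq3 UV.
have Nd := uniq2 UE.
set X := fun m => if m == e3 then psi (r (e3,true)) + phi N (r (e3,false)) else 0.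
exists (fun a => r (hmap [:: d1; d2] e true a)).
apply: (step_generic (X := X) hA hB HF He).
- move=> x v /in2 [->|->] [H|H]; rewrite ?UD1 ?UD2 ?LD1 ?LD2 in H; case: H => <-; by rewrite !inE ?eqxx ?orbT.
- move=> x v /in3 [->|->|->] _ H; rewrite ?UB1 ?UB2 ?UB3 in H; by right.
- move=> x v /in3 [->|->|->] _ H; rewrite ?LB1 ?LB2 ?LB3 in H; case: H => <-; left; by rewrite !inE ?eqxx ?orbT.
- move=> [x dx] [y dy] v Hab Hh Hv.
  case/and3P: (Hab) => Hx Hy /arcbP [w [Hh' [Ht K]]]; rewrite Hh in Hh'; case: Hh' => Ew; subst w.
  rewrite /= in Hx Hy.
  have Ex : up B x = Some v \/ lo B x = Some v by move: Hh; rewrite /hd /=; case: (dx) => H; auto.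
  have Ey : up B y = Some v \/ lo B y = Some v by move: Ht; rewrite /tl /=; case: (dy) => H; auto.
  have nE1 := negbTE (fr_notnew HF He1); have nE2 := negbTE (fr_notnew HF He2);
  have nE3 := negbTE (fr_notnew HF He3); have nE := negbTE (fr_notnew HF He).
  case: (new_end hA HF Hx Ex Hv) => [/in2 [Ex'|Ex']|[/in3 [Ex'|Ex'|Ex'] _]]; subst x;
  case: (new_end hA HF Hy Ey Hv) => [/in2 [Ey'|Ey']|[/in3 [Ey'|Ey'|Ey'] _]]; subst y;
  case/in3: Hv => Ev; subst v;
  case: dx Hh K {Ex Hab}; case: dy Ht {Ey}; rewrite /hd /tl /= => Ht Hh K;
  rewrite ?UB1 ?UB2 ?UB3 ?LB1 ?LB2 ?LB3 ?UD1 ?UD2 ?LD1 ?LD2 in Ht Hh;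
  try congruence;
  try (exfalso; match goal with
    | H : up _ ?z = Some ?w |- _ => apply: (fresh_up hA HF _ H); [assumption| by rewrite !inE ?eqxx ?orbT]
    | H : lo _ ?z = Some ?w |- _ => apply: (fresh_lo hA HF _ H); [assumption| by rewrite !inE ?eqxx ?orbT]
    end);
  case: K => [E|[Nxy [Ndd Kt]]]; try congruence; try (rewrite ?Ek' ?Ec1 ?Ec2 in Kt; done);
  rewrite /hmap /= ?nE1 ?nE2 ?nE3 ?nE ?inE ?eqxx ?orbT /= /ar /arcb /hd /tl /= ?He ?He1 ?He2 ?He3 ?L1 ?L2 ?L3 ?Le ?Ue /= ?eqxx ?Ek ?Eg //=;
  by rewrite andbT // eq_sym.
- move=> x /in2 [->|->]; rewrite /cost ?UD1 ?UD2 ?LD1 ?LD2 /isK ?Ek' ?Ec1 ?Ec2 /= !andbF //.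
- move=> m /in3 [->|->|->] Hm.
  + apply: leq_trans (cost_mod_lo _ _ _ _ hA HF He1 UB1 LB1) _; rewrite Ec1 /= addn0 leq_addr //.
  + apply: leq_trans (cost_mod_lo _ _ _ _ hA HF He2 UB2 LB2) _; rewrite Ec2 /= addn0 leq_addr //.
  + apply: leq_trans (cost_mod_lo _ _ _ _ hA HF He3 UB3 LB3) _; rewrite Ek' /X eqxx //.
- have Ngk : g <> k by move=> E; rewrite E Ek in Eg.
  have N13 : e1 != e3 by apply/eqP => E; rewrite E L3 in L1; case: L1 => E'; apply: Ngk.
  have N23 : e2 != e3 by apply/eqP => E; rewrite E L3 in L2; case: L2 => E'; apply: Ngk.
  rewrite !big_cons big_nil /X (negbTE N13) (negbTE N23) eqxx /=.
  case: VA => V1 V2.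
  have A1 : ar A (e,true) (e3,false).
    by rewrite /ar /= He He3 /arcb /hd /tl /= Le L3 eqxx /= eq_sym N3 Ek.
  have A2 : ar A (e3,true) (e,false).
    by rewrite /ar /= He He3 /arcb /hd /tl /= Le L3 eqxx /= N3 Ek.
  have B1 := V1 _ _ A1; have B2 := V1 _ _ A2.
  have P1 := phi_lt B1 (V2 (e3,false) He3); have P2 := psi_lt B2.
  rewrite /cost Ue /isK Hg Eg /=.
  have Q1 : 0 < phi N (r (e3,false)) by rewrite /phi expn_gt0.
  have Q2 : 0 < psi (r (e3,true)) by rewrite /psi expn_gt0.
  lia.
- exact: VA.
Qed.

Lemma step_c2 A B N r : is_flow A -> is_flow B -> c2_step A B -> valid A r N ->
  exists r', valid B r' N /\ Phi B N r' < Phi A N r.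
Proof.
move=> hA hB [i [k [e1 [e2 [e3 [e4 [g [i1 [i2 [d1 [d2 H]]]]]]]]]]] VA.
case: H => [[[Hi Ei Hk Ek] [He1 He2 He3 He4]] [N34 U3 U4 L4 [N12 U1 U2]] HF [Eg Ei1 Ei2] [[UB3 LB3] [UB1 LB1] [UB2 LB2] [UD1 LD1] [UD2 LD2]]].
have [[UV _] [UE _] _ _ _] := HF.
have [Ng1 Ng2 N12'] := uniq3 UV.
have Nd := uniq2 UE.
set X := fun m => if m == e3 then phi N (r (e3,true)) + psi (r (e3,false)) else 0.
exists (fun a => r (hmap [:: d1; d2] e4 true a)).
apply: (step_generic (X := X) hA hB HF He4).
- move=> x v /in2 [->|->] [H|H]; rewrite ?UD1 ?UD2 ?LD1 ?LD2 in H; case: H => <-; by rewrite !inE ?eqxx ?orbT.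
- move=> x v /in3 [->|->|->] _ H; rewrite ?UB1 ?UB2 ?UB3 in H; case: H => <-; left; by rewrite !inE ?eqxx ?orbT.
- move=> x v /in3 [->|->|->] _ H; rewrite ?LB1 ?LB2 ?LB3 in H; by right.
- move=> [x dx] [y dy] v Hab Hh Hv.
  case/and3P: (Hab) => Hx Hy /arcbP [w [Hh' [Ht K]]]; rewrite Hh in Hh'; case: Hh' => Ew; subst w.
  rewrite /= in Hx Hy.
  have Ex : up B x = Some v \/ lo B x = Some v by move: Hh; rewrite /hd /=; case: (dx) => H; auto.
  have Ey : up B y = Some v \/ lo B y = Some v by move: Ht; rewrite /tl /=; case: (dy) => H; auto.
  have nE1 := negbTE (fr_notnew HF He1); have nE2 := negbTE (fr_notnew HF He2);
  have nE3 := negbTE (fr_notnew HF He3); have nE := negbTE (fr_notnew HF He4).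
  case: (new_end hA HF Hx Ex Hv) => [/in2 [Ex'|Ex']|[/in3 [Ex'|Ex'|Ex'] _]]; subst x;
  case: (new_end hA HF Hy Ey Hv) => [/in2 [Ey'|Ey']|[/in3 [Ey'|Ey'|Ey'] _]]; subst y;
  case/in3: Hv => Ev; subst v;
  case: dx Hh K {Ex Hab}; case: dy Ht {Ey}; rewrite /hd /tl /= => Ht Hh K;
  rewrite ?UB1 ?UB2 ?UB3 ?LB1 ?LB2 ?LB3 ?UD1 ?UD2 ?LD1 ?LD2 in Ht Hh;
  try congruence;
  try (exfalso; match goal with
    | H : up _ ?z = Some ?w |- _ => apply: (fresh_up hA HF _ H); [assumption| by rewrite !inE ?eqxx ?orbT]
    | H : lo _ ?z = Some ?w |- _ => apply: (fresh_lo hA HF _ H); [assumption| by rewrite !inE ?eqxx ?orbT]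
    end);
  case: K => [E|[Nxy [Ndd Kt]]]; try congruence; try (rewrite ?Eg ?Ei1 ?Ei2 in Kt; done);
  rewrite /hmap /= ?nE1 ?nE2 ?nE3 ?nE ?inE ?eqxx ?orbT /= /ar /arcb /hd /tl /= ?He1 ?He2 ?He3 ?He4 ?U1 ?U2 ?U3 ?U4 ?L4 /= ?eqxx ?Ek ?Ei //=;
  try by rewrite andbT // eq_sym.
- move=> x /in2 [->|->]; rewrite /cost ?UD1 ?UD2 ?LD1 ?LD2 /isK ?Eg ?Ei1 ?Ei2 /= !andbF //.
- move=> m /in3 [->|->|->] Hm.
  + apply: leq_trans (cost_mod_up _ _ _ _ hA HF He1 LB1 UB1) _; rewrite Ei1 /= addn0 leq_addr //.
  + apply: leq_trans (cost_mod_up _ _ _ _ hA HF He2 LB2 UB2) _; rewrite Ei2 /= addn0 leq_addr //.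
  + apply: leq_trans (cost_mod_up _ _ _ _ hA HF He3 LB3 UB3) _; rewrite Eg /X eqxx //.
- have Nik : i <> k by move=> E; rewrite E Ek in Ei.
  have N13 : e1 != e3 by apply/eqP => E; rewrite E U3 in U1; case: U1 => E'; apply: Nik.
  have N23 : e2 != e3 by apply/eqP => E; rewrite E U3 in U2; case: U2 => E'; apply: Nik.
  rewrite !big_cons big_nil /X (negbTE N13) (negbTE N23) eqxx /=.
  case: VA => V1 V2.
  have A1 : ar A (e3,false) (e4,true).
    by rewrite /ar /= He4 He3 /arcb /hd /tl /= U3 U4 eqxx /= N34 Ei.
  have A2 : ar A (e4,false) (e3,true).
    by rewrite /ar /= He4 He3 /arcb /hd /tl /= U3 U4 eqxx /= eq_sym N34 Ei.
  have B1 := V1 _ _ A1; have B2 := V1 _ _ A2.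
  have P1 := phi_lt B2 (V2 (e3,true) He3); have P2 := psi_lt B1.
  rewrite /cost U4 L4 /isK Hi Ei Hk Ek /=.
  have Q1 : 0 < phi N (r (e3,true)) by rewrite /phi expn_gt0.
  have Q2 : 0 < psi (r (e3,false)) by rewrite /psi expn_gt0.
  lia.
- exact: VA.
Qed.

Lemma step_c3 A B N r : is_flow A -> is_flow B -> c3_step A B -> valid A r N ->
  exists r', valid B r' N /\ Phi B N r' < Phi A N r.
Proof.
move=> hA hB [g [k [e1 [e2 [e [e3 [e4 [ka1 [ka2 [ga3 [ga4 [f13 [f14 [f23 [f24 H]]]]]]]]]]]]]]] VA.
case: H => [[[Hg Eg Hk Ek] [He1 He2 He He3 He4]] [N12 L1 L2 Ue [Le N34 U3 U4]] HF [Ek1 Ek2 Eg3 Eg4]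
  [[[UB1 LB1] [UB2 LB2] [UB3 LB3] [UB4 LB4]] [UF13 LF13] [UF14 LF14] [UF23 LF23] [UF24 LF24]]].
have [[UV _] [UE _] _ _ _] := HF.
have [Nv1 [Nv2 [Nv3 [Nv4 [Nv5 Nv6]]]]] := uniq4 UV.
have Ngk : g <> k by move=> E; rewrite E Ek in Eg.
have [_ _ _ Hcyc _] := hA.
have Cy : forall x, x \in fE A -> up A x = Some k -> lo A x = Some g -> False.
  move=> x Hx H1 H2; apply: (Hcyc g [:: e; x]) => /=; split => //; split => //.
  by exists k; split.
have N13 : e1 != e3 by apply/eqP => E; subst e3; exact: Cy He1 U3 L1.
have N14 : e1 != e4 by apply/eqP => E; subst e4; exact: Cy He1 U4 L1.
have N23 : e2 != e3 by apply/eqP => E; subst e3; exact: Cy He2 U3 L2.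
have N24 : e2 != e4 by apply/eqP => E; subst e4; exact: Cy He2 U4 L2.
set X := fun m => if m == e1 then psi (r (e1,true)) + phi N (r (e1,false)) else
                  if m == e2 then psi (r (e2,true)) + phi N (r (e2,false)) else
                  if m == e3 then phi N (r (e3,true)) + psi (r (e3,false)) else
                  if m == e4 then phi N (r (e4,true)) + psi (r (e4,false)) else 0.
exists (fun a => r (hmap [:: f13; f14; f23; f24] e false a)).
apply: (step_generic (X := X) hA hB HF He).
- move=> x v /in4 [->|->|->|->] [H|H]; rewrite ?UF13 ?UF14 ?UF23 ?UF24 ?LF13 ?LF14 ?LF23 ?LF24 in H; case: H => <-; by rewrite !inE ?eqxx ?orbT.
- move=> x v /in4 [->|->|->|->] _ H; rewrite ?UB1 ?UB2 ?UB3 ?UB4 in H; try (by right); case: H => <-; left; by rewrite !inE ?eqxx ?orbT.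
- move=> x v /in4 [->|->|->|->] _ H; rewrite ?LB1 ?LB2 ?LB3 ?LB4 in H; try (by right); case: H => <-; left; by rewrite !inE ?eqxx ?orbT.
- move=> [x dx] [y dy] v Hab Hh Hv.
  case/and3P: (Hab) => Hx Hy /arcbP [w [Hh' [Ht K]]]; rewrite Hh in Hh'; case: Hh' => Ew; subst w.
  rewrite /= in Hx Hy.
  have Ex : up B x = Some v \/ lo B x = Some v by move: Hh; rewrite /hd /=; case: (dx) => H; auto.
  have Ey : up B y = Some v \/ lo B y = Some v by move: Ht; rewrite /tl /=; case: (dy) => H; auto.
  have nE1 := negbTE (fr_notnew HF He1); have nE2 := negbTE (fr_notnew HF He2);
  have nE3 := negbTE (fr_notnew HF He3); have nE4 := negbTE (fr_notnew HF He4).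
  case/in4: Hv => Ev; subst v;
  case: (new_end hA HF Hx Ex (v:=_)) => [|/in4 [Ex'|Ex'|Ex'|Ex']|[/in4 [Ex'|Ex'|Ex'|Ex'] _]]; try (by rewrite !inE eqxx ?orbT); subst x;
  move: Hh; rewrite /hd /=; case: dx K {Ex Hab} => /= K Hh;
  rewrite ?UB1 ?UB2 ?UB3 ?UB4 ?LB1 ?LB2 ?LB3 ?LB4 ?UF13 ?UF14 ?UF23 ?UF24 ?LF13 ?LF14 ?LF23 ?LF24 in Hh;
  try congruence;
  try (exfalso; match goal with
    | H : up _ ?z = Some ?w |- _ => apply: (fresh_up hA HF _ H); [assumption| by rewrite !inE ?eqxx ?orbT]
    | H : lo _ ?z = Some ?w |- _ => apply: (fresh_lo hA HF _ H); [assumption| by rewrite !inE ?eqxx ?orbT]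
    end);
  case: (new_end hA HF Hy Ey (v:=_)) => [|/in4 [Ey'|Ey'|Ey'|Ey']|[/in4 [Ey'|Ey'|Ey'|Ey'] _]]; try (by rewrite !inE eqxx ?orbT); subst y;
  move: Ht; rewrite /tl /=; case: dy K {Ey} => /= K Ht;
  rewrite ?UB1 ?UB2 ?UB3 ?UB4 ?LB1 ?LB2 ?LB3 ?LB4 ?UF13 ?UF14 ?UF23 ?UF24 ?LF13 ?LF14 ?LF23 ?LF24 in Ht;
  try congruence;
  try (exfalso; match goal with
    | H : up _ ?z = Some ?w |- _ => apply: (fresh_up hA HF _ H); [assumption| by rewrite !inE ?eqxx ?orbT]
    | H : lo _ ?z = Some ?w |- _ => apply: (fresh_lo hA HF _ H); [assumption| by rewrite !inE ?eqxx ?orbT]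
    end);
  case: K => [E|[Nxy [Ndd Kt]]]; try congruence; try (rewrite ?Ek1 ?Ek2 ?Eg3 ?Eg4 in Kt; done);
  rewrite /hmap /= ?nE1 ?nE2 ?nE3 ?nE4 ?inE ?eqxx ?orbT /= /ar /arcb /hd /tl /= ?He ?He1 ?He2 ?He3 ?He4 ?L1 ?L2 ?U3 ?U4 ?Le ?Ue /= ?eqxx //=.
- move=> x /in4 [->|->|->|->]; rewrite /cost ?UF13 ?UF14 ?UF23 ?UF24 ?LF13 ?LF14 ?LF23 ?LF24 /isK ?Ek1 ?Ek2 ?Eg3 ?Eg4 /= !andbF //.
- have X1 : X e1 = psi (r (e1,true)) + phi N (r (e1,false)) by rewrite /X eqxx.
  have X2 : X e2 = psi (r (e2,true)) + phi N (r (e2,false)) by rewrite /X eq_sym (negbTE N12) eqxx.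
  have X3 : X e3 = phi N (r (e3,true)) + psi (r (e3,false)).
    by rewrite /X eq_sym (negbTE N13) eq_sym (negbTE N23) eqxx.
  have X4 : X e4 = phi N (r (e4,true)) + psi (r (e4,false)).
    by rewrite /X eq_sym (negbTE N14) eq_sym (negbTE N24) eq_sym (negbTE N34) eqxx.
  move=> m /in4 [->|->|->|->] Hm.
  + apply: leq_trans (cost_mod_lo _ _ _ _ hA HF He1 UB1 LB1) _; rewrite Ek1 X1 //.
  + apply: leq_trans (cost_mod_lo _ _ _ _ hA HF He2 UB2 LB2) _; rewrite Ek2 X2 //.
  + apply: leq_trans (cost_mod_up _ _ _ _ hA HF He3 LB3 UB3) _; rewrite Eg3 X3 //.
  + apply: leq_trans (cost_mod_up _ _ _ _ hA HF He4 LB4 UB4) _; rewrite Eg4 X4 //.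
- have X1 : X e1 = psi (r (e1,true)) + phi N (r (e1,false)) by rewrite /X eqxx.
  have X2 : X e2 = psi (r (e2,true)) + phi N (r (e2,false)) by rewrite /X eq_sym (negbTE N12) eqxx.
  have X3 : X e3 = phi N (r (e3,true)) + psi (r (e3,false)).
    by rewrite /X eq_sym (negbTE N13) eq_sym (negbTE N23) eqxx.
  have X4 : X e4 = phi N (r (e4,true)) + psi (r (e4,false)).
    by rewrite /X eq_sym (negbTE N14) eq_sym (negbTE N24) eq_sym (negbTE N34) eqxx.
  rewrite !big_cons big_nil X1 X2 X3 X4.
  case: VA => V1 V2.
  have A1 : ar A (e1,true) (e,true) by rewrite /ar /= He He1 /arcb /hd /tl /= L1 Ue eqxx.
  have A2 : ar A (e2,true) (e,true) by rewrite /ar /= He He2 /arcb /hd /tl /= L2 Ue eqxx.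
  have A3 : ar A (e,false) (e1,false) by rewrite /ar /= He He1 /arcb /hd /tl /= L1 Ue eqxx.
  have A4 : ar A (e,false) (e2,false) by rewrite /ar /= He He2 /arcb /hd /tl /= L2 Ue eqxx.
  have A5 : ar A (e,true) (e3,true) by rewrite /ar /= He He3 /arcb /hd /tl /= Le U3 eqxx.
  have A6 : ar A (e,true) (e4,true) by rewrite /ar /= He He4 /arcb /hd /tl /= Le U4 eqxx.
  have A7 : ar A (e3,false) (e,false) by rewrite /ar /= He He3 /arcb /hd /tl /= Le U3 eqxx.
  have A8 : ar A (e4,false) (e,false) by rewrite /ar /= He He4 /arcb /hd /tl /= Le U4 eqxx.
  have P1 := psi_lt (V1 _ _ A1); have P2 := psi_lt (V1 _ _ A2).
  have P3 := phi_lt (V1 _ _ A3) (V2 (e1,false) He1).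
  have P4 := phi_lt (V1 _ _ A4) (V2 (e2,false) He2).
  have P5 := phi_lt (V1 _ _ A5) (V2 (e3,true) He3).
  have P6 := phi_lt (V1 _ _ A6) (V2 (e4,true) He4).
  have P7 := psi_lt (V1 _ _ A7); have P8 := psi_lt (V1 _ _ A8).
  rewrite /cost Ue Le /isK Hg Eg Hk Ek /=.
  have Q1 : 0 < phi N (r (e,true)) by rewrite /phi expn_gt0.
  move: P1 P2 P3 P4 P5 P6 P7 P8 Q1; clear.
  move: (psi _) (psi _) (psi _) (psi _) (psi _) (psi _) (phi _ _) (phi _ _) (phi _ _) (phi _ _) (phi _ _) (phi _ _).
  move=> *; lia.
- exact: VA.
Qed.

Lemma step_any A B N r : is_flow A -> is_flow B ->
  (c1_step A B \/ c2_step A B \/ c3_step A B) -> valid A r N ->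
  exists r', valid B r' N /\ Phi B N r' < Phi A N r.
Proof.
move=> hA hB [H|[H|H]] V; [exact: step_c1 hA hB H V|exact: step_c2 hA hB H V|exact: step_c3 hA hB H V].
Qed.

Theorem theorem4p22 :
  ~ exists A : nat -> flow,
      is_flow (A 0) /\ cycle_free (A 0) /\ forall n, cstep (A n) (A n.+1).
Proof.
move=> [A [h0 [cf Hs]]].
have [r0 V0] := init_rank h0 cf.
set N := size (nodes (A 0)) in V0.
have Hfl : forall n, is_flow (A n) by move=> n; case: (Hs n).
have Cl : forall n, exists r, valid (A n) r N /\ Phi (A n) N r + n <= Phi (A 0) N r0.
  elim => [|n [r [V Hr]]]; first by exists r0; rewrite addn0.
  case: (Hs n) => _ Hst.
  have [r' [V' Hlt]] := step_any (Hfl n) (Hfl n.+1) Hst V.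
  exists r'; split => //; rewrite addnS; apply: leq_trans Hr; by rewrite ltn_add2r.
have [r [_ H]] := Cl (Phi (A 0) N r0).+1.
move: H; rewrite addnS ltnNge => /negP; apply; exact: leq_addl.
Qed.
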